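(* Let $x=(x_k)_{k\in\mathbb{Z}}$ be a sequence with $x_k\in\{-1,0,1,2,\dots\}$ for all $k$, let $T$ be its record graph, and let $i\in\mathbb{Z}$. If $t_x(i)=-1$, then the number of children of $i$ in $T$ is $d_1(i,T)=x_{i-1}+1$. If $t_x(i)\ge0$, then $d_1(i,T)=x_{i-1}+1-t_x(i)$.
   Context: Write $y(j,k)=\sum_{l=j}^{k-1}x_l$ for $j<k$. The record map is $R_x(i)=\inf\{n>i: y(i,n)\ge0\}$ if this set is nonempty, and $R_x(i)=i$ otherwise; the record graph has vertex set $\mathbb{Z}$ and directed edges $i\to R_x(i)$ for $R_x(i)\ne i$; the children of $i$ are the $j\ne i$ with $R_x(j)=i$. The type of $i$ is $t_x(i)=\inf\{\max(y(m,i),-1): m<i\}\in\{-1,0,1,\dots\}$. *)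

(* Defs.v *)
From mathcomp Require Import all_boot all_order all_algebra.
Set Implicit Arguments. Unset Strict Implicit. Unset Printing Implicit Defensive.
Import Order.TTheory GRing.Theory Num.Theory.
Local Open Scope ring_scope.

(* y(j,k) = sum_{l=j}^{k-1} x_l  (meaningful for j < k; empty sum = 0 otherwise) *)
Definition ysum (x : int -> int) (j k : int) : int :=
  \sum_(0 <= l < `|k - j|%N) x (j + l%:Z).

Definition record_map (x : int -> int) (j n : int) : Prop :=
  (j < n /\ 0 <= ysum x j n /\ forall m, j < m -> m < n -> ysum x j m < 0)
  \/ (n = j /\ forall m, j < m -> ysum x j m < 0).

Definition child (x : int -> int) (i j : int) : Prop :=
  j <> i /\ record_map x j i.

(* t is the type t_x(i) = inf { max(y(m,i), -1) : m < i }; the set is a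
   nonempty set of integers bounded below by -1, so the infimum is attained. *)
Definition is_type (x : int -> int) (i t : int) : Prop :=
  (exists2 m, m < i & Num.max (ysum x m i) (-1) = t) /\
  (forall m, m < i -> t <= Num.max (ysum x m i) (-1)).

Definition num_children (x : int -> int) (i c : int) : Prop :=
  exists s : seq int, [/\ uniq s, (forall j, j \in s <-> child x i j)
                        & (size s)%:Z = c].

(* Main.v *)
Require Import Defs.
From mathcomp Require Import all_boot all_order all_algebra zify.
Import Order.TTheory GRing.Theory Num.Theory.
Local Open Scope ring_scope.

Lemma ysum_shift (x : int -> int) (j : int) (n : nat) :
  ysum x j (j + n%:Z) = \sum_(0%N <= l < n) x (j + (l:nat)%:Z).
Proof. rewrite /ysum; have -> : absz (j + n%:Z - j)%R = n by lia. by []. Qed.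

Lemma ysum_add (x : int -> int) (j : int) (a c : nat) :
  ysum x j (j + (a + c)%N%:Z) = ysum x j (j + a%:Z) + ysum x (j + a%:Z) (j + a%:Z + c%:Z).
Proof.
rewrite !ysum_shift; elim: c => [|c IH].
  by rewrite addn0 [X in _ + X]big_geq // addr0.
rewrite addnS !big_nat_recr //= IH addrA; congr (_ + _ + x _); lia.
Qed.

Lemma ysum_addZ (x : int -> int) (j m k : int) : j <= m -> m <= k ->
  ysum x j k = ysum x j m + ysum x m k.
Proof.
move=> jm mk.
have E1 : m = j + (absz (m - j)%R)%:Z by lia.
have E2 : k = j + (absz (m - j)%R + absz (k - m)%R)%N%:Z by lia.
rewrite E2 ysum_add -E1; congr (_ + ysum x m _); lia.
Qed.

Lemma ysum1 (x : int -> int) (j : int) : ysum x j (j + 1) = x j.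
Proof. by rewrite (ysum_shift x j 1) big_nat1 addr0. Qed.

Lemma ysum0 (x : int -> int) (j : int) : ysum x j j = 0.
Proof. by rewrite /ysum subrr big_geq. Qed.

Definition bb (x : int -> int) (i : int) (n : nat) : int := ysum x (i - n%:Z) i.

Lemma bb0 x i : bb x i 0 = 0.
Proof. by rewrite /bb subr0 ysum0. Qed.

Lemma bbS x i n : bb x i n.+1 = x (i - n.+1%:Z) + bb x i n.
Proof.
rewrite /bb (ysum_addZ x (i - n.+1%:Z) (i - n%:Z) i); [|lia|lia].
have -> : i - n%:Z = i - n.+1%:Z + 1 by lia.
by rewrite ysum1.
Qed.

Lemma bb1 x i : bb x i 1 = x (i - 1).
Proof. by rewrite bbS bb0 addr0. Qed.

Lemma bb_diff x i k n : (k <= n)%N -> ysum x (i - n%:Z) (i - k%:Z) = bb x i n - bb x i k.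
Proof.
move=> kn; rewrite /bb (ysum_addZ x (i - n%:Z) (i - k%:Z) i); [|lia|lia].
by rewrite addrK.
Qed.

Fixpoint MM (x : int -> int) (i : int) (n : nat) : int :=
  match n with 0 => bb x i 1 | n'.+1 => Num.min (MM x i n') (bb x i n'.+1) end.

Lemma MM_le x i n k : (1 <= k <= n)%N -> MM x i n <= bb x i k.
Proof.
elim: n => [|n IH] hk; first lia.
rewrite /=.
case: (ltnP k n.+1) => h.
  have := IH ltac:(lia); lia.
have -> : k = n.+1 by lia.
lia.
Qed.

Lemma MM_ex x i n : exists k, (1 <= k <= n.+1)%N /\ MM x i n.+1 = bb x i k.
Proof.
elim: n => [|n [k [hk e]]]; first by exists 1%N; split => //=; lia.
rewrite /=. rewrite -/(MM x i n.+1) e.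
case: (lerP (bb x i k) (bb x i n.+2)) => h.
  by exists k; split; [lia|lia].
by exists n.+2; split; [lia|lia].
Qed.

Lemma all_MM x i n v : all (fun k => v < bb x i k) (iota 1 n.+1) = (v < MM x i n.+1).
Proof.
elim: n => [|n IH]; first by rewrite /= andbT; apply/idP/idP; lia.
have E : iota 1 n.+2 = iota 1 n.+1 ++ [:: n.+2] by rewrite -[n.+2]addn1 iotaD add1n addn1.
rewrite E all_cat IH /= andbT.
rewrite -/(MM x i n.+1).
apply/idP/idP; lia.
Qed.

Definition childb x i (n : nat) : bool :=
  (0 <= bb x i n) && all (fun k => bb x i n < bb x i k) (iota 1 n.-1).

Lemma count_children x (hx : forall k, -1 <= x k) i n :
  (size (filter (childb x i) (iota 1 n.+1)))%:Z = bb x i 1 + 1 - Num.max (MM x i n.+1) 0.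
Proof.
have hb1 := bb1 x i; have := hx (i - 1).
elim: n => [|n IH] hx1.
  rewrite /= /childb /= andbT; case: ifP => h /=; lia.
have E : iota 1 n.+2 = iota 1 n.+1 ++ [:: n.+2] by rewrite -[n.+2]addn1 iotaD add1n addn1.
have hc : childb x i n.+2 = (0 <= bb x i n.+2) && (bb x i n.+2 < MM x i n.+1).
  by rewrite /childb [n.+2.-1]/= all_MM.
have hM : MM x i n.+2 = Num.min (MM x i n.+1) (bb x i n.+2) by [].
rewrite E filter_cat size_cat PoszD IH // hM [filter _ [:: _]]/= hc.
have hS := bbS x i n.+1; have := hx (i - n.+2%:Z).
have := MM_le x i n.+1 n.+1 ltac:(lia).
case h1: (0 <= bb x i n.+2); case h2: (bb x i n.+2 < MM x i n.+1) => /=.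
- lia.
- move/negbT: h2; rewrite -leNgt; lia.
- move/negbT: h1; rewrite -ltNge; lia.
- move/negbT: h1; rewrite -ltNge; move/negbT: h2; rewrite -leNgt; lia.
Qed.

Theorem lemma4p5 (x : int -> int) (hx : forall k, -1 <= x k) (i t : int)
  (ht : is_type x i t) :
  (t = -1 -> num_children x i (x (i - 1) + 1)) /\
  (0 <= t -> num_children x i (x (i - 1) + 1 - t)).
Proof.
move: ht => [[m0 hm0 hmt] hmin].
have [n hn] : exists n : nat, m0 = i - n.+1%:Z by exists (absz (i - m0)%R).-1; lia.
subst m0.
have Mt : Num.max (MM x i n.+1) 0 = Num.max t 0.
  have [k [hk ek]] := MM_ex x i n.
  have h1 := hmin (i - k%:Z) ltac:(lia).
  have h2 := MM_le x i n.+1 n.+1 ltac:(lia).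
  move: h1 h2 hmt; rewrite /bb in ek *; lia.
have key : forall c, c = x (i - 1) + 1 - Num.max t 0 -> num_children x i c.
  move=> c ->.
  exists (map (fun k : nat => i - k%:Z) (filter (childb x i) (iota 1 n.+1))); split.
  - rewrite map_inj_uniq ?filter_uniq ?iota_uniq // => a b h; lia.
  - move=> j; split.
    + move/mapP => [k hk ->]; rewrite mem_filter mem_iota in hk.
      case/andP: hk => /andP [hc hall] hr.
      split; first lia.
      left; split; first lia; split; first exact: hc.
      move=> m h1 h2.
      have [k' ek'] : exists k' : nat, m = i - k'%:Z by exists (absz (i - m)%R); lia.
      subst m; rewrite bb_diff; last lia.
      have := allP hall k'; rewrite mem_iota => /(_ ltac:(lia)); lia.
    + move=> [hne hr]; case: hr => [[hji [hy hm]] | [e _]]; last by exfalso; apply: hne; rewrite e.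
      have [k ek] : exists k : nat, j = i - k%:Z by exists (absz (i - j)%R); lia.
      subst j.
      have kn : (k <= n.+1)%N.
        rewrite leqNgt; apply/negP => hk.
        have := hm (i - n.+1%:Z) ltac:(lia) ltac:(lia).
        rewrite bb_diff; last lia.
        have := hmin (i - k%:Z) ltac:(lia).
        move: hy hmt; rewrite /bb; lia.
      apply/mapP; exists k => //.
      rewrite mem_filter mem_iota; apply/andP; split; last lia.
      apply/andP; split; first exact: hy.
      apply/allP => k'; rewrite mem_iota => hk'.
      have := hm (i - k'%:Z) ltac:(lia) ltac:(lia).
      rewrite bb_diff; last lia.
      lia.
  - by rewrite size_map count_children // Mt bb1.
split => h; apply: key; lia.
Qed.
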